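(* Let $V_s, V_{sr} : [0,\infty) \to \mathbb{R}^6$ be continuously differentiable (the actual and required spatial velocities of the surrogate end-effector), let $M_e, D_e, K_e \in \mathbb{R}^{6\times 6}$ be the environmental mass, damping and stiffness matrices with $M_e$ symmetric positive semidefinite, and let $\mathbf{x}_e : [0,\infty)\to\mathbb{R}^6$ be the environment deformation. Define the contact force and the required contact force $$f_e = M_e \dot V_s + D_e V_s + K_e \mathbf{x}_e, \qquad f_{ed} = M_e \dot V_{sr} + D_e V_s + K_e \mathbf{x}_e,$$ and let ${}^T F = N_c f_e$, ${}^T F_r = N_c f_{ed}$ for a matrix $N_c\in\mathbb{R}^{6\times 6}$, where the contact-frame velocities ${}^T V, {}^T V_r \in \mathbb{R}^6$ satisfy $N_c^T({}^T V_r - {}^T V) = V_{sr} - V_s$. Let the virtual power flow at the contact frame be $$p_T = ({}^T V_r - {}^T V)^T({}^T F_r - {}^T F).$$ Then there exists a positive constant $\varrho_{0s}$ such that $$\liminf_{t\to\infty} \int_0^t p_T \, d\tau \;\ge\; -\varrho_{0s}.$$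
   Context: This concerns a force-reflected teleoperation setting in which a surrogate robot's end-effector (frame $\{T\}$) contacts an unknown environment modeled as a mass–damper–spring system. The virtual power flow (VPF) at a frame $\{A\}$ is defined as the inner product of the spatial velocity error and the spatial force error, $p_A = ({}^A V_r - {}^A V)^T({}^A F_r - {}^A F)$, where the subscript $r$ denotes ''required'' quantities generated by the controller. *)

(* Defs.v *)
From HB Require Import structures.
From mathcomp Require Import all_boot all_order all_algebra.
From mathcomp Require Import all_classical all_reals all_analysis.
Set Implicit Arguments. Unset Strict Implicit. Unset Printing Implicit Defensive.
Import Order.TTheory GRing.Theory Num.Theory.
Import numFieldNormedType.Exports.
Local Open Scope classical_set_scope.
Local Open Scope ring_scope.

Definition vcomp {R : realType} (V : R -> 'cV[R]_6) (i : 'I_6) : R -> R :=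
  fun s => V s i ord0.

Definition dvec {R : realType} (V : R -> 'cV[R]_6) (t : R) : 'cV[R]_6 :=
  \col_i (derive1 (vcomp V i) t).

Definition C1_nonneg {R : realType} (V : R -> 'cV[R]_6) : Prop :=
  forall i : 'I_6,
    (forall t : R, 0 <= t -> derivable (vcomp V i) t 1) /\
    {within `[0, +oo[, continuous (derive1 (vcomp V i))}.

Definition sym_psd {R : realType} (M : 'M[R]_6) : Prop :=
  M^T = M /\ forall v : 'cV[R]_6, 0 <= (v^T *m M *m v) ord0 ord0.

Definition f_e {R : realType} (Me De Ke : 'M[R]_6) (Vs xe : R -> 'cV[R]_6)
  (t : R) : 'cV[R]_6 :=
  Me *m dvec Vs t + De *m Vs t + Ke *m xe t.

Definition f_ed {R : realType} (Me De Ke : 'M[R]_6) (Vs Vsr xe : R -> 'cV[R]_6)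
  (t : R) : 'cV[R]_6 :=
  Me *m dvec Vsr t + De *m Vs t + Ke *m xe t.

Definition vpf {R : realType} (V Vr F Fr : 'cV[R]_6) : R :=
  ((Vr - V)^T *m (Fr - F)) ord0 ord0.

(* Main.v *)
Require Import Defs.
From HB Require Import structures.
From mathcomp Require Import all_boot all_order all_algebra.
From mathcomp Require Import all_classical all_reals all_analysis.
From mathcomp Require Import ring lra.
Import Order.TTheory GRing.Theory Num.Theory.
Import numFieldNormedType.Exports.
Local Open Scope ring_scope.

Section W.
Local Open Scope classical_set_scope.
Variable R : realType.
Implicit Types (A : set R) (f g : R -> R).

Lemma wcD A f g : {within A, continuous f} -> {within A, continuous g} ->
  {within A, continuous (fun u => f u + g u)}.
Proof.
move=> cf cg x.
exact: (@continuousD _ _ (subspace A) (from_subspace A f) (from_subspace A g) x (cf x) (cg x)).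
Qed.

Lemma wcB A f g : {within A, continuous f} -> {within A, continuous g} ->
  {within A, continuous (fun u => f u - g u)}.
Proof.
move=> cf cg x.
exact: (@continuousB _ _ (subspace A) (from_subspace A f) (from_subspace A g) x (cf x) (cg x)).
Qed.

Lemma wcM A f g : {within A, continuous f} -> {within A, continuous g} ->
  {within A, continuous (fun u => f u * g u)}.
Proof.
move=> cf cg x.
exact: (@continuousM _ (subspace A) (from_subspace A f) (from_subspace A g) x (cf x) (cg x)).
Qed.

Lemma wcC A (c : R) : {within A, continuous (fun _ : R => c)}.
Proof. by move=> x; apply: cst_continuous. Qed.

Lemma wcS A n (h : 'I_n -> R -> R) : (forall i, {within A, continuous (h i)}) ->
  {within A, continuous (fun u => \sum_(i < n) h i u)}.
Proof.
move=> ch.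
have -> : (fun u => \sum_(i < n) h i u) = \sum_(i < n) h i by rewrite fct_sumE.
elim/big_ind: _ => //; first exact: wcC.
by move=> f g cf cg; apply: wcD.
Qed.

Lemma idM (x : R) f g (df dg : R) : is_derive x 1 f df -> is_derive x 1 g dg ->
  is_derive x 1 (fun u => f u * g u) (df * g x + f x * dg).
Proof.
move=> hf hg; apply: is_derive_eq (is_deriveM hf hg) _.
by rewrite addrC [df * _]mulrC.
Qed.

Lemma idS (x : R) n (h : 'I_n -> R -> R) (dh : 'I_n -> R) : (forall i, is_derive x 1 (h i) (dh i)) ->
  is_derive x 1 (fun u => \sum_(i < n) h i u) (\sum_(i < n) dh i).
Proof.
move=> H.
have -> : (fun u => \sum_(i < n) h i u) = \sum_(i < n) h i by rewrite fct_sumE.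
exact: is_derive_sum.
Qed.

Lemma idCM (x : R) (c : R) f (df : R) : is_derive x 1 f df ->
  is_derive x 1 (fun u => c * f u) (c * df).
Proof. move=> hf; exact: (is_deriveZ c hf). Qed.

Lemma idB (x : R) f g (df dg : R) : is_derive x 1 f df -> is_derive x 1 g dg ->
  is_derive x 1 (fun u => f u - g u) (df - dg).
Proof. move=> hf hg; exact: (is_deriveB hf hg). Qed.

End W.

Lemma step1 (R : realType) (Vs Vsr xe TV TVr : R -> 'cV[R]_6) (Me De Ke : 'M[R]_6)
  (Nc : R -> 'M[R]_6) s :
  (Nc s)^T *m (TVr s - TV s) = Vsr s - Vs s ->
  vpf (TV s) (TVr s) (Nc s *m f_e Me De Ke Vs xe s) (Nc s *m f_ed Me De Ke Vs Vsr xe s)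
  = \sum_(i < 6) \sum_(j < 6) (vcomp Vsr i s - vcomp Vs i s) * Me i j *
      (derive1 (vcomp Vsr j) s - derive1 (vcomp Vs j) s).
Proof.
move=> h; rewrite /vpf -mulmxBr.
have -> : f_ed Me De Ke Vs Vsr xe s - f_e Me De Ke Vs xe s = Me *m (dvec Vsr s - dvec Vs s).
  rewrite /f_ed /f_e mulmxBr.
  by rewrite opprD addrACA subrr addr0 opprD addrACA subrr addr0.
rewrite mulmxA -[Nc s]trmxK -trmx_mul h.
rewrite mxE; apply: eq_bigr => i _.
rewrite !mxE mulr_sumr; apply: eq_bigr => j _.
by rewrite !mxE mulrA.
Qed.

Theorem lemma4 (R : realType)
  (Vs Vsr xe TV TVr : R -> 'cV[R]_6) (Me De Ke : 'M[R]_6) (Nc : R -> 'M[R]_6)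
  (hVs : C1_nonneg Vs) (hVsr : C1_nonneg Vsr) (hMe : sym_psd Me)
  (hNc : forall t : R, 0 <= t -> (Nc t)^T *m (TVr t - TV t) = Vsr t - Vs t) :
  let TF := fun t => Nc t *m f_e Me De Ke Vs xe t in
  let TFr := fun t => Nc t *m f_ed Me De Ke Vs Vsr xe t in
  let pT := fun t => vpf (TV t) (TVr t) (TF t) (TFr t) in
  exists rho : R, 0 < rho /\
    (limf_einf (fun t : R => (Rintegral lebesgue_measure `[0, t]%classic pT)%:E)
       (pinfty_nbhs R) >= (- rho)%:E)%E.
Proof.
move=> TF TFr pT.
pose e i s := vcomp Vsr i s - vcomp Vs i s.
pose d i s := derive1 (vcomp Vsr i) s - derive1 (vcomp Vs i) s.
pose q s := \sum_(i < 6) \sum_(j < 6) e i s * Me i j * d j s.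
pose G s := \sum_(i < 6) \sum_(j < 6) e i s * Me i j * e j s.
pose F s := 2^-1 * G s.
have hpq : forall s, 0 <= s -> pT s = q s.
  by move=> s s0; rewrite /pT /TF /TFr (step1 _ _ _ xe _ _ _ De Ke _ _ (hNc s s0)).
have sym : forall i j, Me i j = Me j i by move=> i j; rewrite -{1}hMe.1 mxE.
have hder : forall (i : 'I_6) (s : R), 0 <= s -> is_derive s 1 (e i) (d i s).
  move=> i s s0; apply: idB; rewrite derive1E; apply: derivableP;
    [exact: ((hVsr i).1 s s0) | exact: ((hVs i).1 s s0)].
have hG : forall s : R, 0 <= s -> is_derive s 1 G (2 * q s).
  move=> s s0; apply: is_derive_eq.
    apply: idS => i; apply: idS => j; apply: idM; last exact: hder.
    apply: idM. all: try exact: hder.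
  rewrite /=.
  under eq_bigr => i _ do under eq_bigr => j _ do rewrite mulr0 addr0.
  under eq_bigr => i _ do rewrite big_split.
  rewrite big_split /=.
  have -> : \sum_(i < 6) \sum_(j < 6) d i s * Me i j * e j s = q s.
    rewrite exchange_big; apply: eq_bigr => i _; apply: eq_bigr => j _.
    rewrite (sym j i); ring.
  have -> : \sum_(i < 6) \sum_(j < 6) e i s * Me i j * d j s = q s by [].
  ring.
have hF : forall s : R, 0 <= s -> is_derive s 1 F (q s).
  move=> s s0; apply: is_derive_eq (idCM _ _ (2^-1) G _ (hG s s0)) _.
  by rewrite mulrA mulVf ?mul1r.
have Gpos : forall s : R, 0 <= G s.
  move=> s; have := hMe.2 (Vsr s - Vs s).
  suff -> : G s = ((Vsr s - Vs s)^T *m Me *m (Vsr s - Vs s)) ord0 ord0 by [].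
  rewrite mxE /G exchange_big /=; apply: eq_bigr => j _.
  rewrite !mxE mulr_suml; apply: eq_bigr => i _.
  by rewrite !mxE.
have key : forall t : R, 0 < t ->
    Rintegral lebesgue_measure `[0, t]%classic pT = F t - F 0.
  move=> t t0.
  transitivity (Rintegral lebesgue_measure `[0, t]%classic q).
    apply: eq_Rintegral.
    move=> s; rewrite inE /= in_itv /= => /andP[s0 _]; exact: hpq.
  rewrite /Rintegral (@continuous_FTC2 _ q F _ _ t0).
  - by rewrite -EFinD.
  - have ce : forall i, {within `[0, t], continuous (e i)}%classic.
      move=> i; apply: wcB; apply: derivable_within_continuous => u;
        rewrite in_itv /= => /andP[u0 _]; [exact: (hVsr i).1 u u0|exact: (hVs i).1 u u0].
    have sub : (`[0, t] `<=` `[0, +oo[)%classic.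
      by move=> u /=; rewrite !in_itv /= => /andP[-> _].
    have cd : forall i, {within `[0, t], continuous (d i)}%classic.
      move=> i; apply: wcB; apply: (continuous_subspaceW sub);
        [exact: (hVsr i).2|exact: (hVs i).2].
    apply: wcS => i; apply: wcS => j; apply: wcM; last exact: cd.
    apply: wcM; [exact: ce|exact: wcC].
  - have cF : forall s : R, 0 <= s -> {for s, continuous F}.
      move=> s s0; apply/differentiable_continuous; rewrite -derivable1_diffP.
      by case: (hF s s0).
    split.
    + move=> s; rewrite in_itv /= => /andP[s0 _]; by case: (hF s (ltW s0)).
    + by apply: cvg_at_right_filter; apply: cF.
    + by apply: cvg_at_left_filter; apply: cF; apply: ltW.
  - move=> s; rewrite in_itv /= => /andP[s0 _].
    by rewrite derive1E; case: (hF s (ltW s0)).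
exists (F 0 + 1); split.
  by have := Gpos 0; rewrite /F; lra.
rewrite limf_einfE.
apply: (@le_trans _ _ (ereal_inf ((fun t => (Rintegral lebesgue_measure `[0, t]%classic pT)%:E) @` [set u : R | 0 < u]%classic))).
  apply: le_ereal_inf_tmp => _ [u u0 <-]; rewrite lee_fin key //.
  by have := Gpos u; rewrite /F; lra.
apply: ereal_sup_ubound; exists [set u : R | 0 < u]%classic => //.
exists 0; split; first exact: real0.
by move=> x.
Qed.
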